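(* Assume $b<0$ and $a>0$, and let $(J,E)\in D_1$, with $q\in(0,\sqrt{a/3})$ such that $J=q(q^2-a)/b$. Then $$\lim_{E\to E_+(J)}T(J,E)=+\infty,\quad \lim_{E\to E_+(J)}\tilde M(J,E)=+\infty,\quad \lim_{E\to E_+(J)}\frac{\tilde M(J,E)}{T(J,E)}=\frac{q^2-a}{2b},$$ $$\lim_{E\to E_+(J)}\tilde P(J,E)=+\infty,\quad \lim_{E\to E_+(J)}\frac{\tilde P(J,E)}{T(J,E)}=\frac{q(q^2-a)}{2b}.$$
   Context: Consider the ODE $u_{xx}+au+b|u|^2u=0$ with $b<0<a$, and the quantities $J=\operatorname{Im}(u\bar u_x)$, $E=\frac12|u_x|^2+\frac a2|u|^2+\frac b4|u|^4$. Let $V_J(r)=\frac{J^2}{2r^2}+a\frac{r^2}{2}+b\frac{r^4}{4}$. For $0<J<\sqrt{\frac{4a^3}{27b^2}}$ write $J=q(q^2-a)/b=Q(Q^2-a)/b$ with $0<q^2<a/3<Q^2<a$, $q,Q>0$; set $E_-(J)=\frac1{4b}(Q^2-a)(3Q^2+a)$ and $E_+(J)=\frac1{4b}(q^2-a)(3q^2+a)$ (local minimum and maximum values of $V_J$). Let $D_1=\{(J,E):0<J<\sqrt{\frac{4a^3}{27b^2}},\ E_-(J)<E<E_+(J)\}$. For $(J,E)\in D_1$, let $r_1<r_2<r_3$ be the positive roots of $E-V_J(r)$ and define $T(J,E)=2\int_{r_1}^{r_2}\frac{dr}{\sqrt{2(E-V_J(r))}}$, $\tilde M(J,E)=\int_{r_1}^{r_2}\frac{r^2\,dr}{\sqrt{2(E-V_J(r))}}$,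 and $\tilde P(J,E)=\frac12 J\,T(J,E)$. *)

(* Defs.v *)
From Stdlib Require Import Reals Lra ClassicalEpsilon.
From Coquelicot Require Import Coquelicot.
Open Scope R_scope.

Definition VJ (a b J r : R) : R :=
  J ^ 2 / (2 * r ^ 2) + a * r ^ 2 / 2 + b * r ^ 4 / 4.

(* E_+(J) = (q^2 - a)(3 q^2 + a)/(4 b), where J = q (q^2 - a)/b, 0 < q^2 < a/3 *)
Definition E_plus (a b q : R) : R := (q ^ 2 - a) * (3 * q ^ 2 + a) / (4 * b).

Definition roots_spec (a b J E : R) (t : R * R * R) : Prop :=
  let '(r1, r2, r3) := t in
  0 < r1 /\ r1 < r2 /\ r2 < r3 /\
  E - VJ a b J r1 = 0 /\ E - VJ a b J r2 = 0 /\ E - VJ a b J r3 = 0 /\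
  (forall r, 0 < r -> E - VJ a b J r = 0 -> r = r1 \/ r = r2 \/ r = r3).

(* The root triple (chosen by classical choice; unique whenever it exists) *)
Definition roots (a b J E : R) : R * R * R :=
  epsilon (inhabits (0, 0, 0)) (roots_spec a b J E).

Definition r1 (a b J E : R) : R := fst (fst (roots a b J E)).
Definition r2 (a b J E : R) : R := snd (fst (roots a b J E)).

Definition T (a b J E : R) : R :=
  2 * RInt_gen (fun r => 1 / sqrt (2 * (E - VJ a b J r)))
                 (at_right (r1 a b J E)) (at_left (r2 a b J E)).

Definition Mt (a b J E : R) : R :=
  RInt_gen (fun r => r ^ 2 / sqrt (2 * (E - VJ a b J r)))
           (at_right (r1 a b J E)) (at_left (r2 a b J E)).

Definition Pt (a b J E : R) : R := 1 / 2 * J * T a b J E.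

(* Main.v *)
Require Import Defs.
From Stdlib Require Import Reals Lra Psatz ClassicalEpsilon.
From Coquelicot Require Import Coquelicot.
Open Scope R_scope.

Definition Sf s1 s2 t := s1 + (s2 - s1) * sin t ^ 2.
Definition phi s1 s2 t := sqrt (Sf s1 s2 t).
Definition gf k s1 s2 s3 t := 1 / sqrt (2 * k * (s3 - Sf s1 s2 t)).

Lemma sin2_le1 t : sin t ^ 2 <= 1.
Proof. pose proof (sin2_cos2 t). unfold Rsqr in H. nra. Qed.

Lemma Sf_bounds s1 s2 t : s1 < s2 -> s1 <= Sf s1 s2 t <= s2.
Proof. intros. unfold Sf. pose proof (sin2_le1 t). pose proof (pow2_ge_0 (sin t)). nra. Qed.

Lemma Sf_strict s1 s2 t : s1 < s2 -> 0 < t < PI/2 -> s1 < Sf s1 s2 t < s2.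
Proof. intros H [H1 H2]. unfold Sf.
  assert (0 < sin t) by (apply sin_gt_0; pose proof PI_RGT_0; lra).
  assert (0 < cos t) by (apply cos_gt_0; pose proof PI_RGT_0; lra).
  pose proof (sin2_cos2 t) as Hsc. unfold Rsqr in Hsc.
  assert (0 < sin t ^ 2) by (apply pow_lt; auto).
  assert (sin t ^ 2 < 1) by (assert (0 < cos t * cos t) by nra; simpl; lra).
  split. assert (0 < (s2 - s1) * sin t ^ 2) by (apply Rmult_lt_0_compat; lra). lra.
  assert ((s2 - s1) * sin t ^ 2 < (s2 - s1) * 1) by (apply Rmult_lt_compat_l; lra). lra. Qed.

Lemma Sf_mono s1 s2 t t' : s1 < s2 -> 0 <= t -> t < t' -> t' <= PI/2 -> Sf s1 s2 t < Sf s1 s2 t'.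
Proof. intros. unfold Sf. pose proof PI_RGT_0.
  assert (sin t < sin t') by (apply sin_increasing_1; lra).
  assert (0 <= sin t) by (apply sin_ge_0; lra).
  assert (sin t ^ 2 < sin t' ^ 2) by nra. nra. Qed.

Lemma phi_mono s1 s2 t t' : 0 < s1 -> s1 < s2 -> 0 <= t -> t < t' -> t' <= PI/2 -> phi s1 s2 t < phi s1 s2 t'.
Proof. intros. unfold phi. apply sqrt_lt_1.
  pose proof (Sf_bounds s1 s2 t H0); lra. pose proof (Sf_bounds s1 s2 t' H0); lra.
  apply Sf_mono; auto. Qed.

Lemma Sf_pos s1 s2 t : 0 < s1 -> s1 < s2 -> 0 < Sf s1 s2 t.
Proof. intros. pose proof (Sf_bounds s1 s2 t H0). lra. Qed.

Lemma phi_derive s1 s2 t : 0 < s1 -> s1 < s2 ->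
  is_derive (phi s1 s2) t ((s2 - s1) * sin t * cos t / phi s1 s2 t).
Proof. intros. pose proof (Sf_pos s1 s2 t H H0) as HS. unfold phi, Sf in *.
  auto_derive. lra. 
  assert (0 < sqrt (s1 + (s2 - s1) * sin t ^ 2)) by (apply sqrt_lt_R0; lra).
  replace (s1 + (s2 - s1) * (sin t * (sin t * 1))) with (s1 + (s2 - s1) * sin t ^ 2) by ring.
  field. lra. Qed.

Lemma phi_cont s1 s2 t : 0 < s1 -> s1 < s2 -> continuous (phi s1 s2) t.
Proof. intros. apply (@ex_derive_continuous R_AbsRing R_NormedModule). eexists. apply phi_derive; auto. Qed.

Lemma dphi_cont s1 s2 t : 0 < s1 -> s1 < s2 -> continuous (fun t => (s2 - s1) * sin t * cos t / phi s1 s2 t) t.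
Proof. intros. pose proof (Sf_pos s1 s2 t H H0) as HS. apply (@ex_derive_continuous R_AbsRing R_NormedModule). unfold phi, Sf in *.
  auto_derive. replace (sin t * (sin t * 1)) with (sin t ^ 2) by ring.
  assert (0 < sqrt (s1 + (s2 - s1) * sin t ^ 2)) by (apply sqrt_lt_R0; lra). repeat split; lra. Qed.

Lemma gf_cont k s1 s2 s3 t : 0 < k -> s1 < s2 -> s2 < s3 -> continuous (gf k s1 s2 s3) t.
Proof. intros. pose proof (Sf_bounds s1 s2 t H0) as HS. apply (@ex_derive_continuous R_AbsRing R_NormedModule). unfold gf, Sf in *.
  auto_derive. replace (sin t * (sin t * 1)) with (sin t ^ 2) by ring.
  assert (0 < 2 * k * (s3 - (s1 + (s2 - s1) * sin t ^ 2))) by (apply Rmult_lt_0_compat; lra).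
  assert (0 < sqrt (2 * k * (s3 - (s1 + (s2 - s1) * sin t ^ 2)))) by (apply sqrt_lt_R0; lra). unfold Rminus in *. repeat split; lra. Qed.

Lemma gf_pos k s1 s2 s3 t : 0 < k -> s1 < s2 -> s2 < s3 -> 0 < gf k s1 s2 s3 t.
Proof. intros. pose proof (Sf_bounds s1 s2 t H0) as HS. unfold gf.
  assert (0 < 2 * k * (s3 - Sf s1 s2 t)) by (apply Rmult_lt_0_compat; lra).
  assert (0 < sqrt (2 * k * (s3 - Sf s1 s2 t))) by (apply sqrt_lt_R0; lra).
  apply Rdiv_lt_0_compat; lra. Qed.

Lemma gf_le k s1 s2 s3 t : 0 < k -> s1 < s2 -> s2 < s3 -> gf k s1 s2 s3 t <= 1 / sqrt (2 * k * (s3 - s2)).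
Proof. intros. pose proof (Sf_bounds s1 s2 t H0) as HS. unfold gf.
  assert (0 < sqrt (2 * k * (s3 - s2))) by (apply sqrt_lt_R0; apply Rmult_lt_0_compat; lra).
  assert (sqrt (2 * k * (s3 - s2)) <= sqrt (2 * k * (s3 - Sf s1 s2 t))) by (apply sqrt_le_1_alt; apply Rmult_le_compat_l; lra).
  unfold Rdiv. rewrite !Rmult_1_l. apply Rinv_le_contravar; lra. Qed.

Lemma integrand_eq k s1 s2 s3 (W h : R -> R) t : 0 < k -> 0 < s1 -> s1 < s2 -> s2 < s3 ->
  (forall r, 0 < r -> r ^ 2 * W r = k * (r ^ 2 - s1) * (r ^ 2 - s2) * (r ^ 2 - s3)) ->
  0 < t < PI / 2 ->
  0 < W (phi s1 s2 t) /\
  (s2 - s1) * sin t * cos t / phi s1 s2 t * (h (phi s1 s2 t) / sqrt (2 * W (phi s1 s2 t)))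
   = h (phi s1 s2 t) * gf k s1 s2 s3 t.
Proof.
  intros Hk H1 H12 H23 HW Ht.
  assert (0 < sin t) by (apply sin_gt_0; pose proof PI_RGT_0; lra).
  assert (0 < cos t) by (apply cos_gt_0; pose proof PI_RGT_0; lra).
  pose proof (sin2_cos2 t) as Hsc. unfold Rsqr in Hsc.
  pose proof (Sf_strict s1 s2 t H12 Ht) as HS.
  unfold gf. unfold phi. set (S := Sf s1 s2 t) in *.
  assert (HSd : S = s1 + (s2 - s1) * sin t ^ 2) by reflexivity.
  assert (Hrho : 0 < sqrt S) by (apply sqrt_lt_R0; lra).
  assert (Hrho2 : sqrt S ^ 2 = S) by (apply pow2_sqrt; lra).
  set (rho := sqrt S) in *.
  specialize (HW rho Hrho). rewrite Hrho2 in HW.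
  assert (HWv : W rho = k * (s2 - s1) ^ 2 * (sin t) ^ 2 * (cos t) ^ 2 * (s3 - S) / S).
  { assert (E1 : S - s1 = (s2 - s1) * sin t ^ 2) by (rewrite HSd; ring).
    assert (E2 : S - s2 = - (s2 - s1) * cos t ^ 2).
    { rewrite HSd. replace (sin t ^ 2) with (1 - cos t ^ 2) by (simpl; lra). ring. }
    rewrite E1, E2 in HW.
    replace (W rho) with (S * W rho / S) by (field; lra). rewrite HW. field. lra. }
  assert (Hu0 : 0 < 2 * k * (s3 - S)) by (apply Rmult_lt_0_compat; lra).
  assert (Hu : 0 < sqrt (2 * k * (s3 - S))) by (apply sqrt_lt_R0; lra).
  assert (Hu2 : sqrt (2 * k * (s3 - S)) ^ 2 = 2 * k * (s3 - S)) by (apply pow2_sqrt; lra).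
  set (u := sqrt (2 * k * (s3 - S))) in *.
  assert (HWpos : 0 < W rho).
  { rewrite HWv. apply Rdiv_lt_0_compat; [|lra].
    apply Rmult_lt_0_compat; [|lra]. apply Rmult_lt_0_compat; [|apply pow_lt; lra].
    apply Rmult_lt_0_compat; [|apply pow_lt; lra]. apply Rmult_lt_0_compat; [lra|apply pow_lt; lra]. }
  split; auto.
  set (Y := (s2 - s1) * sin t * cos t * u / rho).
  assert (HY : 0 <= Y).
  { unfold Y. apply Rlt_le, Rdiv_lt_0_compat; [|lra].
    repeat apply Rmult_lt_0_compat; lra. }
  assert (HYY : 2 * W rho = Y * Y).
  { rewrite HWv. unfold Y.
    replace (2 * (k * (s2 - s1) ^ 2 * sin t ^ 2 * cos t ^ 2 * (s3 - S) / S))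
      with ((s2 - s1) ^ 2 * sin t ^ 2 * cos t ^ 2 * (2 * k * (s3 - S)) / S) by (field; lra).
    rewrite <- Hu2, <- Hrho2. field. lra. }
  rewrite HYY, sqrt_square by auto. unfold Y. field. repeat split; lra.
Qed.

Lemma ball_R c (e : posreal) y : ball c e y -> c - e < y < c + e.
Proof. intro H. apply Rabs_lt_between'. exact H. Qed.

Lemma ball_R_intro c (e : posreal) y : Rabs (y - c) < e -> ball c e y.
Proof. intro H. exact H. Qed.

Lemma phi_0 s1 s2 : phi s1 s2 0 = sqrt s1.
Proof. unfold phi, Sf. rewrite sin_0. f_equal. ring. Qed.
Lemma phi_PI2 s1 s2 : phi s1 s2 (PI/2) = sqrt s2.
Proof. unfold phi, Sf. rewrite sin_PI2. f_equal. ring. Qed.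

Lemma phi_range s1 s2 t : 0 < s1 -> s1 < s2 -> 0 < t < PI/2 -> sqrt s1 < phi s1 s2 t < sqrt s2.
Proof. intros. rewrite <- phi_0 with (s2 := s2), <- (phi_PI2 s1 s2).
  split; apply phi_mono; lra. Qed.

Lemma phi_range' s1 s2 t : 0 < s1 -> s1 < s2 -> sqrt s1 <= phi s1 s2 t <= sqrt s2.
Proof. intros. pose proof (Sf_bounds s1 s2 t H0). unfold phi. split; apply sqrt_le_1_alt; lra. Qed.

Lemma phi_pre s1 s2 x : 0 < s1 -> s1 < s2 -> sqrt s1 < x < sqrt s2 ->
  exists t, 0 < t < PI/2 /\ phi s1 s2 t = x.
Proof. intros H1 H2 Hx.
  assert (Hc : forall z, continuous (phi s1 s2) z) by (intro; apply phi_cont; auto).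
  pose proof PI_RGT_0.
  destruct (IVT_gen_consistent (phi s1 s2) 0 (PI/2) x Hc) as [t [Ht Hpt]].
  { rewrite phi_0, phi_PI2. rewrite Rmin_left, Rmax_right; lra. }
  rewrite Rmin_left, Rmax_right in Ht by lra.
  exists t. split; auto. split.
  - destruct (Req_dec t 0) as [->|]; [rewrite phi_0 in Hpt; lra| lra].
  - destruct (Req_dec t (PI/2)) as [->|]; [rewrite phi_PI2 in Hpt; lra| lra].
Qed.

Lemma repr k s1 s2 s3 Hb (W h : R -> R) :
  0 < k -> 0 < s1 -> s1 < s2 -> s2 < s3 ->
  (forall r, 0 < r -> r ^ 2 * W r = k * (r ^ 2 - s1) * (r ^ 2 - s2) * (r ^ 2 - s3)) ->
  (forall r, 0 < r -> continuous W r) -> (forall r, 0 < r -> continuous h r) ->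
  (forall r, sqrt s1 <= r <= sqrt s2 -> Rabs (h r) <= Hb) ->
  is_RInt_gen (fun r => h r / sqrt (2 * W r)) (at_right (sqrt s1)) (at_left (sqrt s2))
    (RInt (fun t => h (phi s1 s2 t) * gf k s1 s2 s3 t) 0 (PI/2)).
Proof.
  intros Hk H1 H12 H23 HW HWc Hhc Hhb.
  pose proof PI_RGT_0 as HPI.
  set (f := fun r => h r / sqrt (2 * W r)).
  set (H := fun t => h (phi s1 s2 t) * gf k s1 s2 s3 t).
  assert (Hs1 : 0 < sqrt s1) by (apply sqrt_lt_R0; lra).
  assert (Hs12 : sqrt s1 < sqrt s2) by (apply sqrt_lt_1; lra).
  assert (HWpos : forall r, sqrt s1 < r < sqrt s2 -> 0 < W r).
  { intros r Hr. assert (Hr0 : 0 < r) by lra.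
    assert (Hr1 : s1 < r ^ 2). { rewrite <- (pow2_sqrt s1) by lra. simpl; nra. }
    assert (Hr2 : r ^ 2 < s2). { rewrite <- (pow2_sqrt s2) by lra. simpl; nra. }
    specialize (HW r Hr0).
    assert (0 < k * (r ^ 2 - s1) * ((s2 - r ^ 2) * (s3 - r ^ 2))).
    { apply Rmult_lt_0_compat. apply Rmult_lt_0_compat; lra. apply Rmult_lt_0_compat; lra. }
    assert (0 < r ^ 2) by (apply pow_lt; lra).
    replace (W r) with (r ^ 2 * W r / r ^ 2) by (field; lra). rewrite HW.
    apply Rdiv_lt_0_compat; [|lra]. replace (k * (r ^ 2 - s1) * (r ^ 2 - s2) * (r ^ 2 - s3))
      with (k * (r ^ 2 - s1) * ((s2 - r ^ 2) * (s3 - r ^ 2))) by ring. lra. }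
  assert (Hfc : forall r, sqrt s1 < r < sqrt s2 -> continuous f r).
  { intros r Hr. unfold f, Rdiv.
    apply (continuous_mult h (fun r => / sqrt (2 * W r))). apply Hhc; lra.
    apply continuous_Rinv_comp. apply continuous_sqrt_comp.
    apply (continuous_mult (fun _ => 2) W). apply continuous_const. apply HWc; lra.
    assert (0 < sqrt (2 * W r)) by (apply sqrt_lt_R0; specialize (HWpos r Hr); lra). lra. }
  assert (HHc : forall t, continuous H t).
  { intro t. unfold H. apply (continuous_mult (fun t => h (phi s1 s2 t)) (gf k s1 s2 s3)).
    apply (continuous_comp (phi s1 s2) h). apply phi_cont; auto. apply Hhc.
    unfold phi. apply sqrt_lt_R0. apply Sf_pos; auto.
    apply gf_cont; auto. }
  assert (HHex : forall a b, ex_RInt H a b) by (intros; apply (@ex_RInt_continuous R_CompleteNormedModule); auto).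
  set (G0 := 1 / sqrt (2 * k * (s3 - s2))).
  assert (HHb : forall t, Rabs (H t) <= Hb * G0).
  { intro t. unfold H. rewrite Rabs_mult. pose proof (gf_pos k s1 s2 s3 t Hk H12 H23).
    rewrite (Rabs_right (gf _ _ _ _ t)) by lra. apply Rmult_le_compat.
    apply Rabs_pos. lra. apply Hhb. apply phi_range'; auto. apply gf_le; auto. }
  assert (HHb0 : 0 <= Hb). { pose proof (Hhb (sqrt s1)). pose proof (Rabs_pos (h (sqrt s1))). lra. }
  assert (HG0 : 0 < G0). { unfold G0. apply Rdiv_lt_0_compat. lra. apply sqrt_lt_R0. apply Rmult_lt_0_compat; lra. }
  set (L := RInt H 0 (PI/2)).
  unfold is_RInt_gen, filterlimi, filter_le, filtermapi.
  intros P [eps Heps].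
  set (M := Hb * G0 + 1).
  assert (HM : 0 < M) by (unfold M; nra).
  set (al := Rmin (eps / (2 * M)) (PI / 4)).
  assert (Hal : 0 < al). { unfold al. apply Rmin_pos. apply Rdiv_lt_0_compat. apply cond_pos. lra. lra. }
  assert (Hal2 : al <= PI / 4) by apply Rmin_r.
  assert (Hal3 : al <= eps / (2 * M)) by apply Rmin_l.
  set (be := PI / 2 - al).
  assert (Hpa : sqrt s1 < phi s1 s2 al) by (rewrite <- (phi_0 s1 s2); apply phi_mono; lra).
  assert (Hpb : phi s1 s2 be < sqrt s2) by (rewrite <- (phi_PI2 s1 s2); apply phi_mono; unfold be; lra).
  assert (Hpab : phi s1 s2 al <= phi s1 s2 be).
  { destruct (Req_dec al be) as [<-|]. lra. apply Rlt_le, phi_mono; unfold be in *; lra. }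
  apply Filter_prod with (Q := fun x => sqrt s1 < x < phi s1 s2 al) (R := fun y => phi s1 s2 be < y < sqrt s2).
  - assert (Hd : 0 < phi s1 s2 al - sqrt s1) by lra.
    exists (mkposreal _ Hd). intros y Hy Hy'. apply ball_R in Hy. simpl in Hy. lra.
  - assert (Hd : 0 < sqrt s2 - phi s1 s2 be) by lra.
    exists (mkposreal _ Hd). intros y Hy Hy'. apply ball_R in Hy. simpl in Hy. lra.
  - intros x y Hx Hy. simpl.
    destruct (phi_pre s1 s2 x H1 H12 ltac:(lra)) as [tx [Htx Hptx]].
    destruct (phi_pre s1 s2 y H1 H12 ltac:(lra)) as [ty [Hty Hpty]].
    assert (Htxa : tx < al).
    { destruct (Rlt_le_dec tx al) as [|Hc]; auto. exfalso.
      destruct (Req_dec tx al) as [->|]. lra.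
      assert (phi s1 s2 al < phi s1 s2 tx) by (apply phi_mono; lra). lra. }
    assert (Htyb : be < ty).
    { destruct (Rlt_le_dec be ty) as [|Hc]; auto. exfalso.
      destruct (Req_dec ty be) as [->|]. lra.
      assert (phi s1 s2 ty < phi s1 s2 be) by (apply phi_mono; unfold be in *; lra). lra. }
    assert (Hxy : x < y) by lra.
    assert (Htxy : tx < ty) by (unfold be in *; lra).
    exists (RInt f x y). split.
    + apply (@RInt_correct R_CompleteNormedModule). apply (@ex_RInt_continuous R_CompleteNormedModule). intros z Hz.
      rewrite Rmin_left, Rmax_right in Hz by lra. apply Hfc. lra.
    + apply Heps. apply ball_R_intro.
      assert (Heq : RInt f x y = RInt H tx ty).
      { pose proof (is_RInt_comp f (phi s1 s2) (fun t => (s2 - s1) * sin t * cos t / phi s1 s2 t) tx ty) as Hcomp.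
        rewrite Hptx, Hpty in Hcomp.
        assert (Hc1 : forall z, Rmin tx ty <= z <= Rmax tx ty -> continuous f (phi s1 s2 z)).
        { intros z Hz. rewrite Rmin_left, Rmax_right in Hz by lra. apply Hfc.
          apply phi_range; auto. lra. }
        assert (Hc2 : forall z, Rmin tx ty <= z <= Rmax tx ty ->
          is_derive (phi s1 s2) z ((s2 - s1) * sin z * cos z / phi s1 s2 z) /\
          continuous (fun t => (s2 - s1) * sin t * cos t / phi s1 s2 t) z).
        { intros z Hz. split. apply phi_derive; auto. apply dphi_cont; auto. }
        rewrite <- (is_RInt_unique _ _ _ _ (Hcomp Hc1 Hc2)).
        apply RInt_ext. intros z Hz. rewrite Rmin_left, Rmax_right in Hz by lra.
        unfold f, H. change (scal ?a ?b) with (a * b).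
        apply (integrand_eq k s1 s2 s3 W h z); auto. lra. }
      rewrite Heq.
      assert (Hch1 : RInt H 0 tx + RInt H tx ty = RInt H 0 ty) by (apply (RInt_Chasles H); auto).
      assert (Hch2 : RInt H 0 ty + RInt H ty (PI/2) = L) by (apply (RInt_Chasles H); auto).
      assert (Hb1 : Rabs (RInt H 0 tx) <= (tx - 0) * (Hb * G0)) by (apply abs_RInt_le_const; auto; lra).
      assert (Hb2 : Rabs (RInt H ty (PI/2)) <= (PI/2 - ty) * (Hb * G0)) by (apply abs_RInt_le_const; auto; lra).
      replace (RInt H tx ty - L) with (- (RInt H 0 tx + RInt H ty (PI/2))) by lra.
      rewrite Rabs_Ropp. eapply Rle_lt_trans. apply Rabs_triang.
      assert (tx * (Hb * G0) <= tx * M) by (apply Rmult_le_compat_l; unfold M; lra).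
      assert ((PI/2 - ty) * (Hb * G0) <= (PI/2 - ty) * M) by (apply Rmult_le_compat_l; unfold M; lra).
      assert (tx * M < al * M) by (apply Rmult_lt_compat_r; lra).
      assert ((PI/2 - ty) * M < al * M) by (apply Rmult_lt_compat_r; unfold be in *; lra).
      assert (al * M <= eps / (2 * M) * M) by (apply Rmult_le_compat_r; lra).
      replace (eps / (2 * M) * M) with (eps / 2) in * by (field; lra).
      lra.
Qed.

Lemma roots_unique a b J E t t' : roots_spec a b J E t -> roots_spec a b J E t' -> t = t'.
Proof.
  destruct t as [[x1 x2] x3], t' as [[y1 y2] y3]. simpl.
  intros (H1 & H2 & H3 & Z1 & Z2 & Z3 & Hall) (G1 & G2 & G3 & W1 & W2 & W3 & Gall).
  assert (Hx1 := Gall x1 ltac:(lra) Z1). assert (Hx2 := Gall x2 ltac:(lra) Z2).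
  assert (Hx3 := Gall x3 ltac:(lra) Z3).
  assert (Hy1 := Hall y1 ltac:(lra) W1). assert (Hy2 := Hall y2 ltac:(lra) W2).
  assert (Hy3 := Hall y3 ltac:(lra) W3).
  assert (e1 : x1 = y1) by (destruct Hx1 as [|[|]]; destruct Hy1 as [|[|]]; lra).
  assert (e3 : x3 = y3) by (destruct Hx3 as [|[|]]; destruct Hy3 as [|[|]]; lra).
  assert (e2 : x2 = y2) by (destruct Hx2 as [|[|]]; lra).
  subst. reflexivity.
Qed.

Lemma roots_val a b J E t : roots_spec a b J E t -> roots a b J E = t.
Proof.
  intro H. apply (roots_unique a b J E). 2: exact H.
  unfold roots. apply epsilon_spec. exists t. exact H.
Qed.

Lemma spec_from_factor a b J E k s1 s2 s3 : 0 < k -> 0 < s1 -> s1 < s2 -> s2 < s3 ->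
  (forall r, 0 < r -> r ^ 2 * (E - VJ a b J r) = k * (r ^ 2 - s1) * (r ^ 2 - s2) * (r ^ 2 - s3)) ->
  roots_spec a b J E (sqrt s1, sqrt s2, sqrt s3).
Proof.
  intros Hk H1 H12 H23 HW. simpl.
  assert (Hzero : forall s, 0 < s -> (s = s1 \/ s = s2 \/ s = s3) -> E - VJ a b J (sqrt s) = 0).
  { intros s Hs Hor. assert (Hq : 0 < sqrt s) by (apply sqrt_lt_R0; lra).
    specialize (HW _ Hq). rewrite pow2_sqrt in HW by lra.
    assert (Hp : k * (s - s1) * (s - s2) * (s - s3) = 0) by (destruct Hor as [ -> | [ -> | -> ] ]; ring).
    rewrite Hp in HW. apply (Rmult_eq_reg_l s). lra. lra. }
  repeat split.
  - apply sqrt_lt_R0; lra.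
  - apply sqrt_lt_1; lra.
  - apply sqrt_lt_1; lra.
  - apply Hzero; auto.
  - apply Hzero; auto; lra.
  - apply Hzero; auto; lra.
  - intros r Hr Hz. specialize (HW r Hr). rewrite Hz, Rmult_0_r in HW.
    assert (Hr2 : r = sqrt (r ^ 2)) by (rewrite sqrt_pow2; lra).
    assert (k * ((r ^ 2 - s1) * ((r ^ 2 - s2) * (r ^ 2 - s3))) = 0) by lra.
    apply Rmult_integral in H. destruct H as [|H]. lra.
    apply Rmult_integral in H. destruct H as [|H].
    left. rewrite Hr2. f_equal. lra.
    apply Rmult_integral in H. destruct H as [|H].
    right; left. rewrite Hr2. f_equal. lra.
    right; right. rewrite Hr2. f_equal. lra.
Qed.

Lemma quad_zero al be ga x y z : x < y -> y < z ->
  al * x ^ 2 + be * x + ga = 0 -> al * y ^ 2 + be * y + ga = 0 -> al * z ^ 2 + be * z + ga = 0 ->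
  al = 0 /\ be = 0 /\ ga = 0.
Proof.
  intros Hxy Hyz Hx Hy Hz.
  assert (E1 : (x - y) * (al * (x + y) + be) = 0) by (rewrite <- (Rminus_diag_eq _ _ (eq_trans Hx (eq_sym Hy))); ring).
  assert (E2 : (y - z) * (al * (y + z) + be) = 0) by (rewrite <- (Rminus_diag_eq _ _ (eq_trans Hy (eq_sym Hz))); ring).
  apply Rmult_integral in E1. apply Rmult_integral in E2.
  destruct E1 as [|E1]; [lra|]. destruct E2 as [|E2]; [lra|].
  assert (E3 : (x - z) * al = 0) by lra.
  apply Rmult_integral in E3. destruct E3 as [|E3]; [lra|]. subst al.
  assert (be = 0) by lra. subst be. split; [auto|split; [auto|lra]].
Qed.

Lemma cubic_factor c3 c2 c1 c0 x y z : x < y -> y < z ->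
  c3 * x ^ 3 + c2 * x ^ 2 + c1 * x + c0 = 0 ->
  c3 * y ^ 3 + c2 * y ^ 2 + c1 * y + c0 = 0 ->
  c3 * z ^ 3 + c2 * z ^ 2 + c1 * z + c0 = 0 ->
  forall s, c3 * s ^ 3 + c2 * s ^ 2 + c1 * s + c0 = c3 * (s - x) * (s - y) * (s - z).
Proof.
  intros Hxy Hyz Hx Hy Hz s.
  set (al := c2 + c3 * (x + y + z)).
  set (be := c1 - c3 * (x * y + x * z + y * z)).
  set (ga := c0 + c3 * x * y * z).
  assert (HD : forall w, c3 * w ^ 3 + c2 * w ^ 2 + c1 * w + c0 - c3 * (w - x) * (w - y) * (w - z)
     = al * w ^ 2 + be * w + ga) by (intro; unfold al, be, ga; ring).
  destruct (quad_zero al be ga x y z Hxy Hyz) as (Ha & Hb & Hc).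
  - rewrite <- HD. rewrite Hx. ring.
  - rewrite <- HD. rewrite Hy. ring.
  - rewrite <- HD. rewrite Hz. ring.
  - specialize (HD s). rewrite Ha, Hb, Hc in HD. lra.
Qed.

Lemma ivt_root (f : R -> R) x y : (forall z, continuous f z) -> x < y ->
  f x * f y < 0 -> exists z, x < z < y /\ f z = 0.
Proof.
  intros Hc Hxy Hs.
  destruct (IVT_gen_consistent f x y 0 Hc) as [z [Hz Hfz]].
  { destruct (Rlt_le_dec (f x) 0).
    - assert (0 < f y) by nra. rewrite Rmin_left, Rmax_right; lra.
    - assert (f y < 0) by nra. rewrite Rmin_right, Rmax_left; lra. }
  rewrite Rmin_left, Rmax_right in Hz by lra.
  exists z. split; auto. split.
  - destruct (Req_dec z x) as [->|]; [nra|lra].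
  - destruct (Req_dec z y) as [->|]; [nra|lra].
Qed.

Lemma VJ_poly a b J E r : 0 < r ->
  r ^ 2 * (E - VJ a b J r) = (- b / 4) * (r ^ 2) ^ 3 + (- a / 2) * (r ^ 2) ^ 2 + E * r ^ 2 + (- (J ^ 2) / 2).
Proof. intro. unfold VJ. field. lra. Qed.

Lemma p_shift a b q E s : b <> 0 ->
  (- b / 4) * s ^ 3 + (- a / 2) * s ^ 2 + E * s + (- ((q * (q ^ 2 - a) / b) ^ 2) / 2)
  = (- b / 4) * (s - (q ^ 2 - a) / b) ^ 2 * (s - (- 2 * q ^ 2 / b)) - (E_plus a b q - E) * s.
Proof. intro. unfold E_plus. field. auto. Qed.

Lemma near_roots a b q eta E : b < 0 -> 0 < a -> 0 < q -> q ^ 2 < a / 3 ->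
  let s0 := (q ^ 2 - a) / b in let sg := - 2 * q ^ 2 / b in let k := - b / 4 in
  0 < eta -> eta <= (s0 - sg) / 2 ->
  E_plus a b q - k * eta ^ 2 * (s0 - sg) / (8 * s0) < E -> E < E_plus a b q ->
  exists s1 s2 s3, 0 < s1 /\ s1 < s0 - eta /\ s0 - eta < s2 /\ s2 < s0 /\ s0 < s3 /\ s3 < s0 + eta /\
    forall r, 0 < r -> r ^ 2 * (E - VJ a b (q * (q ^ 2 - a) / b) r)
       = k * (r ^ 2 - s1) * (r ^ 2 - s2) * (r ^ 2 - s3).
Proof.
  intros Hb Ha Hq Hq3 s0 sg k Heta Heta2 HE1 HE2.
  assert (Hs0 : 0 < s0). { unfold s0. apply Rdiv_neg_neg; lra. }
  assert (Hsg : 0 < sg). { unfold sg. apply Rdiv_neg_neg. nra. lra. }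
  assert (Hsgs0 : sg < s0). { unfold sg, s0. apply Rmult_lt_reg_r with (-b). lra.
    replace (-2 * q ^ 2 / b * - b) with (2 * q ^ 2) by (field; lra).
    replace ((q ^ 2 - a) / b * - b) with (a - q ^ 2) by (field; lra). lra. }
  assert (Hk : 0 < k) by (unfold k; lra).
  set (J := q * (q ^ 2 - a) / b).
  assert (HJ : 0 < J). { unfold J. apply Rdiv_neg_neg; [|lra]. assert (q^2 - a < 0) by lra. nra. }
  set (P := fun s => k * s ^ 3 + (- a / 2) * s ^ 2 + E * s + (- (J ^ 2) / 2)).
  set (d := E_plus a b q - E).
  assert (Hd : 0 < d) by (unfold d; lra).
  set (X := k * eta ^ 2).
  assert (HX : 0 < X) by (unfold X; apply Rmult_lt_0_compat; [lra| apply pow_lt; lra]).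
  set (de := X * (s0 - sg) / (8 * s0)).
  assert (Hdd : d < de) by (unfold d, de, X; lra).
  assert (HPs : forall s, P s = X / eta ^ 2 * (s - s0) ^ 2 * (s - sg) - d * s).
  { intro s. unfold P, X, k, d, J, s0, sg. rewrite p_shift by lra. field. split; lra. }
  assert (Hc : forall z, continuous P z).
  { intro z. apply (@ex_derive_continuous R_AbsRing R_NormedModule). unfold P. auto_derive. auto. }
  assert (HP0 : P 0 < 0). { unfold P. assert (0 < J ^ 2) by (apply pow_lt; lra). simpl; lra. }
  assert (Hde : X * (s0 - sg) / 2 = 4 * de * s0) by (unfold de; field; lra).
  assert (HP1 : 0 < P (s0 - eta)).
  { rewrite HPs. replace (X / eta ^ 2 * (s0 - eta - s0) ^ 2) with X by (field; lra).
    assert (X * (s0 - sg) / 2 <= X * (s0 - eta - sg)) by (replace (X * (s0 - sg) / 2) with (X * ((s0 - sg) / 2)) by field; apply Rmult_le_compat_l; lra).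
    assert (d * (s0 - eta) < de * s0) by nra. nra. }
  assert (HP2 : P s0 < 0).
  { rewrite HPs. replace (s0 - s0) with 0 by ring. simpl. nra. }
  assert (HP3 : 0 < P (s0 + eta)).
  { rewrite HPs. replace (X / eta ^ 2 * (s0 + eta - s0) ^ 2) with X by (field; lra).
    assert (X * (s0 - sg) <= X * (s0 + eta - sg)) by (apply Rmult_le_compat_l; lra).
    assert (d * (s0 + eta) < de * (2 * s0)) by nra. nra. }
  destruct (ivt_root P 0 (s0 - eta) Hc ltac:(lra) ltac:(nra)) as [s1 [Hs1 Z1]].
  destruct (ivt_root P (s0 - eta) s0 Hc ltac:(lra) ltac:(nra)) as [s2 [Hs2 Z2]].
  destruct (ivt_root P s0 (s0 + eta) Hc ltac:(lra) ltac:(nra)) as [s3 [Hs3 Z3]].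
  exists s1, s2, s3. repeat split; try lra.
  intros r Hr. rewrite VJ_poly by auto.
  unfold P in Z1, Z2, Z3.
  apply (cubic_factor k (- a / 2) E (- (J ^ 2) / 2) s1 s2 s3); lra.
Qed.

Lemma T_Mt_repr a b J E k s1 s2 s3 : 0 < k -> 0 < s1 -> s1 < s2 -> s2 < s3 ->
  (forall r, 0 < r -> r ^ 2 * (E - VJ a b J r) = k * (r ^ 2 - s1) * (r ^ 2 - s2) * (r ^ 2 - s3)) ->
  T a b J E = 2 * RInt (gf k s1 s2 s3) 0 (PI/2) /\
  Mt a b J E = RInt (fun t => Sf s1 s2 t * gf k s1 s2 s3 t) 0 (PI/2).
Proof.
  intros Hk H1 H12 H23 HW.
  pose proof (roots_val a b J E _ (spec_from_factor a b J E k s1 s2 s3 Hk H1 H12 H23 HW)) as Hr.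
  assert (HWc : forall r, 0 < r -> continuous (fun r => E - VJ a b J r) r).
  { intros r Hr0. apply (@ex_derive_continuous R_AbsRing R_NormedModule). unfold VJ.
    auto_derive. assert (0 < r * (r * 1)) by nra. lra. }
  unfold T, Mt, r1, r2. rewrite Hr. cbn [fst snd]. split.
  - erewrite is_RInt_gen_unique.
    2: apply (repr k s1 s2 s3 1 (fun r => E - VJ a b J r) (fun _ => 1)); auto.
    + apply Rmult_eq_compat_l. apply RInt_ext. intros x _. apply Rmult_1_l.
    + intros. apply continuous_const.
    + intros. rewrite Rabs_R1. lra.
  - erewrite is_RInt_gen_unique.
    2: apply (repr k s1 s2 s3 s2 (fun r => E - VJ a b J r) (fun r => r ^ 2)); auto.
    + apply RInt_ext. intros. unfold phi. rewrite pow2_sqrt. auto.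
      apply Rlt_le, Sf_pos; auto.
    + intros r _. apply (@ex_derive_continuous R_AbsRing R_NormedModule). auto_derive. auto.
    + intros r Hr0. assert (0 <= sqrt s1) by apply sqrt_pos.
      rewrite Rabs_right by (apply Rle_ge, pow2_ge_0).
      rewrite <- (pow2_sqrt s2) by lra. simpl. nra.
Qed.

Lemma gf_ex k s1 s2 s3 a b : 0 < k -> s1 < s2 -> s2 < s3 -> ex_RInt (gf k s1 s2 s3) a b.
Proof. intros. apply (@ex_RInt_continuous R_CompleteNormedModule). intros. apply gf_cont; auto. Qed.

Lemma Sgf_ex k s1 s2 s3 a b : 0 < k -> 0 < s1 -> s1 < s2 -> s2 < s3 ->
  ex_RInt (fun t => Sf s1 s2 t * gf k s1 s2 s3 t) a b.
Proof. intros. apply (@ex_RInt_continuous R_CompleteNormedModule). intros.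
  apply (continuous_mult (Sf s1 s2) (gf k s1 s2 s3)). 2: apply gf_cont; auto.
  apply (@ex_derive_continuous R_AbsRing R_NormedModule). unfold Sf. auto_derive. auto. Qed.

Lemma pt_bound k s0 s1 s2 s3 t : 0 < k -> 0 < s1 -> s1 < s2 -> s2 < s3 -> s2 <= s0 ->
  s2 * gf k s1 s2 s3 t - sqrt s0 / sqrt (2 * k) <= Sf s1 s2 t * gf k s1 s2 s3 t <= s2 * gf k s1 s2 s3 t.
Proof.
  intros Hk H1 H12 H23 H20. pose proof (Sf_bounds s1 s2 t H12) as HS.
  pose proof (gf_pos k s1 s2 s3 t Hk H12 H23) as Hg.
  split; [|apply Rmult_le_compat_r; lra].
  set (S := Sf s1 s2 t) in *.
  assert (He : 0 < s3 - S) by lra.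
  assert (Hc : 0 < sqrt (2 * k)) by (apply sqrt_lt_R0; lra).
  assert (Hse : 0 < sqrt (s3 - S)) by (apply sqrt_lt_R0; lra).
  assert (Hgf : gf k s1 s2 s3 t = 1 / (sqrt (2 * k) * sqrt (s3 - S))).
  { unfold gf. fold S. rewrite <- sqrt_mult by lra. reflexivity. }
  assert (Hd : s2 - S <= sqrt s0 * sqrt (s3 - S)).
  { rewrite <- sqrt_mult by lra. rewrite <- (sqrt_pow2 (s2 - S)) by lra.
    apply sqrt_le_1_alt. simpl. nra. }
  assert ((s2 - S) * gf k s1 s2 s3 t <= sqrt s0 / sqrt (2 * k)).
  { rewrite Hgf. unfold Rdiv. rewrite Rinv_mult.
    apply (Rmult_le_reg_r (sqrt (s3 - S))); auto.
    replace ((s2 - S) * (1 * (/ sqrt (2 * k) * / sqrt (s3 - S))) * sqrt (s3 - S))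
      with ((s2 - S) * / sqrt (2 * k)) by (field; lra).
    replace (sqrt s0 * / sqrt (2 * k) * sqrt (s3 - S)) with ((sqrt s0 * sqrt (s3 - S)) * / sqrt (2 * k)) by ring.
    apply Rmult_le_compat_r. apply Rlt_le, Rinv_0_lt_compat; auto. auto. }
  nra.
Qed.

Lemma IM_bounds k s0 s1 s2 s3 : 0 < k -> 0 < s1 -> s1 < s2 -> s2 < s3 -> s2 <= s0 ->
  s2 * RInt (gf k s1 s2 s3) 0 (PI/2) - PI / 2 * (sqrt s0 / sqrt (2 * k))
    <= RInt (fun t => Sf s1 s2 t * gf k s1 s2 s3 t) 0 (PI/2)
  /\ RInt (fun t => Sf s1 s2 t * gf k s1 s2 s3 t) 0 (PI/2) <= s2 * RInt (gf k s1 s2 s3) 0 (PI/2).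
Proof.
  intros Hk H1 H12 H23 H20. pose proof PI_RGT_0.
  assert (Hex := gf_ex k s1 s2 s3 0 (PI/2) Hk H12 H23).
  assert (HexS := Sgf_ex k s1 s2 s3 0 (PI/2) Hk H1 H12 H23).
  assert (Hsc : is_RInt (fun t => s2 * gf k s1 s2 s3 t) 0 (PI/2) (s2 * RInt (gf k s1 s2 s3) 0 (PI/2))).
  { apply (@is_RInt_scal R_CompleteNormedModule). apply (@RInt_correct R_CompleteNormedModule). auto. }
  set (c := sqrt s0 / sqrt (2 * k)).
  assert (Hmn : is_RInt (fun t => s2 * gf k s1 s2 s3 t - c) 0 (PI/2)
     (s2 * RInt (gf k s1 s2 s3) 0 (PI/2) - PI / 2 * c)).
  { apply (@is_RInt_minus R_CompleteNormedModule). auto.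
    replace (PI / 2 * c) with ((PI/2 - 0) * c) by ring. apply (@is_RInt_const R_CompleteNormedModule). }
  split.
  - rewrite <- (is_RInt_unique _ _ _ _ Hmn). apply RInt_le. lra.
    eexists; eauto. auto. intros t _. apply (pt_bound k s0 s1 s2 s3 t); auto.
  - rewrite <- (is_RInt_unique _ _ _ _ Hsc). apply RInt_le. lra.
    auto. eexists; eauto. intros t _. apply (pt_bound k s0 s1 s2 s3 t); auto.
Qed.

Lemma log_integral c A B : 0 < c -> 0 < A -> 0 < B ->
  is_RInt (fun t => 1 / (c * (A + B * (PI / 2 - t)))) 0 (PI/2)
    ((ln (A + B * (PI / 2)) - ln A) / (c * B)).
Proof.
  intros Hc HA HB. pose proof PI_RGT_0.
  set (F := fun t => - ln (A + B * (PI / 2 - t)) / (c * B)).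
  replace ((ln (A + B * (PI / 2)) - ln A) / (c * B)) with (minus (F (PI/2)) (F 0)).
  2: { unfold F, minus, plus, opp; simpl. replace (PI / 2 - PI / 2) with 0 by ring.
       replace (A + B * 0) with A by ring. replace (PI/2 - 0) with (PI/2) by ring. field. lra. }
  apply (@is_RInt_derive R_CompleteNormedModule).
  - intros t Ht. rewrite Rmin_left, Rmax_right in Ht by lra. unfold F.
    assert (0 <= B * (PI/2 - t)) by (apply Rmult_le_pos; lra). auto_derive. lra. field. repeat split; lra.
  - intros t Ht. rewrite Rmin_left, Rmax_right in Ht by lra.
    apply (@ex_derive_continuous R_AbsRing R_NormedModule). auto_derive.
    assert (0 <= B * (PI/2 - t)) by (apply Rmult_le_pos; lra). assert (0 < c * (A + B * (PI/2 - t))) by (apply Rmult_lt_0_compat; lra). unfold Rminus in *. lra.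
Qed.

Lemma gf_lower k s0 s1 s2 s3 A t : 0 < k -> 0 < s1 -> s1 < s2 -> s2 < s3 -> s2 <= s0 -> 0 < A ->
  s3 - s2 < A ^ 2 -> 0 < t < PI / 2 ->
  1 / (sqrt (2 * k) * (A + sqrt s0 * (PI / 2 - t))) <= gf k s1 s2 s3 t.
Proof.
  intros Hk H1 H12 H23 H20 HA H3 Ht. pose proof PI_RGT_0.
  set (u := PI / 2 - t).
  assert (Hu : 0 < u) by (unfold u; lra).
  assert (Hcos : 0 < cos t) by (apply cos_gt_0; lra).
  assert (Hcu : cos t < u). { unfold u. rewrite <- sin_shift. apply sin_lt_x. lra. }
  pose proof (sin2_cos2 t) as Hsc. unfold Rsqr in Hsc.
  assert (HB : 0 <= sqrt s0) by apply sqrt_pos.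
  assert (HB2 : sqrt s0 ^ 2 = s0) by (apply pow2_sqrt; lra).
  set (S := Sf s1 s2 t).
  assert (HS : S = s1 + (s2 - s1) * sin t ^ 2) by reflexivity.
  assert (Hle : s3 - S <= (A + sqrt s0 * u) ^ 2).
  { assert (s2 - S = (s2 - s1) * (cos t * cos t)) by (rewrite HS; simpl; nra).
    assert ((s2 - s1) * (cos t * cos t) <= s0 * (u * u)).
    { apply Rmult_le_compat; try nra. }
    assert (0 <= A * sqrt s0 * u) by (apply Rmult_le_pos; nra).
    replace ((A + sqrt s0 * u) ^ 2) with (A ^ 2 + sqrt s0 ^ 2 * (u * u) + 2 * (A * sqrt s0 * u)) by ring.
    rewrite HB2. lra. }
  pose proof (Sf_bounds s1 s2 t H12). fold S in H0.
  assert (Hc : 0 < sqrt (2 * k)) by (apply sqrt_lt_R0; lra).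
  assert (Hsq : sqrt (2 * k * (s3 - S)) <= sqrt (2 * k) * (A + sqrt s0 * u)).
  { rewrite sqrt_mult by lra. apply Rmult_le_compat_l. lra.
    rewrite <- (sqrt_pow2 (A + sqrt s0 * u)) by nra. apply sqrt_le_1_alt. auto. }
  assert (Hpos : 0 < sqrt (2 * k * (s3 - S))) by (apply sqrt_lt_R0; apply Rmult_lt_0_compat; lra).
  unfold gf. fold S. unfold Rdiv. rewrite !Rmult_1_l. apply Rinv_le_contravar; auto.
Qed.

Lemma IG_lower k s0 : 0 < k -> 0 < s0 -> forall M, exists eta, 0 < eta /\
  forall s1 s2 s3, 0 < s1 -> s1 < s2 -> s2 < s3 -> s2 <= s0 -> s3 - s2 < 2 * eta ->
  M <= 2 * RInt (gf k s1 s2 s3) 0 (PI/2).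
Proof.
  intros Hk Hs0 M. pose proof PI_RGT_0.
  set (c := sqrt (2 * k)). set (B := sqrt s0).
  assert (Hc : 0 < c) by (apply sqrt_lt_R0; lra).
  assert (HB : 0 < B) by (apply sqrt_lt_R0; lra).
  set (A := exp (ln (B * (PI / 2)) - c * B * Rabs M)).
  assert (HA : 0 < A) by apply exp_pos.
  exists (A ^ 2 / 2). split. apply Rdiv_lt_0_compat; [apply pow_lt|]; lra.
  intros s1 s2 s3 H1 H12 H23 H20 H3.
  assert (Hint := log_integral c A B Hc HA HB).
  assert (Hle : (ln (A + B * (PI / 2)) - ln A) / (c * B) <= RInt (gf k s1 s2 s3) 0 (PI/2)).
  { rewrite <- (is_RInt_unique _ _ _ _ Hint). apply RInt_le. lra.
    eexists; eauto. apply gf_ex; auto.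
    intros t Ht. apply (gf_lower k s0 s1 s2 s3 A t); auto. lra. }
  assert (HlnA : ln A = ln (B * (PI / 2)) - c * B * Rabs M) by (unfold A; apply ln_exp).
  assert (Hln : ln (B * (PI / 2)) <= ln (A + B * (PI / 2))).
  { apply ln_le. apply Rmult_lt_0_compat; lra. lra. }
  assert (Hfin : Rabs M <= (ln (A + B * (PI / 2)) - ln A) / (c * B)).
  { rewrite HlnA. apply (Rmult_le_reg_r (c * B)). apply Rmult_lt_0_compat; lra.
    unfold Rdiv. rewrite Rmult_assoc, Rinv_l, Rmult_1_r. nra.
    apply Rgt_not_eq. apply Rmult_lt_0_compat; lra. }
  pose proof (Rle_abs M). pose proof (Rabs_pos M). lra.
Qed.

Lemma lim_pinf (F : R -> R) Ep :
  (forall M, exists d, 0 < d /\ forall E, Ep - d < E < Ep -> M <= F E) ->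
  filterlim F (at_left Ep) (Rbar_locally p_infty).
Proof.
  intros HF P [M HM]. destruct (HF (M + 1)) as [d [Hd HE]].
  exists (mkposreal d Hd). intros y Hy Hlt. apply HM. apply ball_R in Hy. simpl in Hy.
  assert (M + 1 <= F y) by (apply HE; lra). lra.
Qed.

Lemma lim_fin (F : R -> R) Ep l :
  (forall eps, 0 < eps -> exists d, 0 < d /\ forall E, Ep - d < E < Ep -> Rabs (F E - l) < eps) ->
  filterlim F (at_left Ep) (locally l).
Proof.
  intros HF. apply filterlim_locally. intros eps.
  destruct (HF eps (cond_pos eps)) as [d [Hd HE]].
  exists (mkposreal d Hd). intros y Hy Hlt. apply ball_R_intro. apply HE.
  apply ball_R in Hy. simpl in Hy. lra.
Qed.

Lemma evT a b q : b < 0 -> 0 < a -> 0 < q -> q ^ 2 < a / 3 ->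
  let s0 := (q ^ 2 - a) / b in let k := - b / 4 in
  forall M eta, 0 < eta -> exists d, 0 < d /\ forall E, E_plus a b q - d < E < E_plus a b q ->
  exists s1 s2 s3, 0 < s1 /\ s1 < s2 /\ s2 < s3 /\ s0 - eta < s2 /\ s2 < s0 /\
    T a b (q * (q ^ 2 - a) / b) E = 2 * RInt (gf k s1 s2 s3) 0 (PI/2) /\
    Mt a b (q * (q ^ 2 - a) / b) E = RInt (fun t => Sf s1 s2 t * gf k s1 s2 s3 t) 0 (PI/2) /\
    M <= 2 * RInt (gf k s1 s2 s3) 0 (PI/2).
Proof.
  intros Hb Ha Hq Hq3 s0 k M eta Heta.
  set (sg := - 2 * q ^ 2 / b).
  assert (Hs0 : 0 < s0). { unfold s0. apply Rdiv_neg_neg; lra. }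
  assert (Hsgs0 : sg < s0). { unfold sg, s0. apply Rmult_lt_reg_r with (-b). lra.
    replace (-2 * q ^ 2 / b * - b) with (2 * q ^ 2) by (field; lra).
    replace ((q ^ 2 - a) / b * - b) with (a - q ^ 2) by (field; lra). lra. }
  assert (Hk : 0 < k) by (unfold k; lra).
  destruct (IG_lower k s0 Hk Hs0 M) as [e1 [He1 HIG]].
  set (e := Rmin (Rmin eta e1) ((s0 - sg) / 2)).
  assert (He : 0 < e). { unfold e. repeat apply Rmin_pos; lra. }
  assert (He2 : e <= (s0 - sg) / 2) by apply Rmin_r.
  assert (He3 : e <= eta) by (unfold e; eapply Rle_trans; [apply Rmin_l| apply Rmin_l]).
  assert (He4 : e <= e1) by (unfold e; eapply Rle_trans; [apply Rmin_l| apply Rmin_r]).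
  exists (k * e ^ 2 * (s0 - sg) / (8 * s0)). split.
  { apply Rdiv_lt_0_compat; [|lra]. apply Rmult_lt_0_compat; [|lra].
    apply Rmult_lt_0_compat; [lra|apply pow_lt; lra]. }
  intros E [HE1 HE2].
  destruct (near_roots a b q e E Hb Ha Hq Hq3 He He2 HE1 HE2)
    as (s1 & s2 & s3 & H1 & H2 & H3 & H4 & H5 & H6 & HW).
  fold s0 k in H1, H2, H3, H4, H5, H6, HW.
  destruct (T_Mt_repr a b (q * (q ^ 2 - a) / b) E k s1 s2 s3 Hk H1 ltac:(lra) ltac:(lra) HW) as [HT HM].
  exists s1, s2, s3. repeat split; try lra.
  apply HIG; lra.
Qed.

Theorem proposition3 (a b J q : R) :
  b < 0 -> 0 < a ->
  0 < J -> J < sqrt (4 * a ^ 3 / (27 * b ^ 2)) ->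
  0 < q -> q < sqrt (a / 3) -> J = q * (q ^ 2 - a) / b ->
  filterlim (fun E => T a b J E) (at_left (E_plus a b q)) (Rbar_locally p_infty) /\
  filterlim (fun E => Mt a b J E) (at_left (E_plus a b q)) (Rbar_locally p_infty) /\
  filterlim (fun E => Mt a b J E / T a b J E) (at_left (E_plus a b q))
    (locally ((q ^ 2 - a) / (2 * b))) /\
  filterlim (fun E => Pt a b J E) (at_left (E_plus a b q)) (Rbar_locally p_infty) /\
  filterlim (fun E => Pt a b J E / T a b J E) (at_left (E_plus a b q))
    (locally (q * (q ^ 2 - a) / (2 * b))).
Proof.
  intros Hb Ha HJ _ Hq Hq3 HJd.
  assert (Hq3' : q ^ 2 < a / 3).
  { assert (0 < a / 3) by lra. pose proof (sqrt_sqrt (a / 3) ltac:(lra)). simpl. nra. }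
  set (s0 := (q ^ 2 - a) / b). set (k := - b / 4).
  assert (Hs0 : 0 < s0). { unfold s0. apply Rdiv_neg_neg; lra. }
  assert (Hk : 0 < k) by (unfold k; lra).
  set (K := PI / 2 * (sqrt s0 / sqrt (2 * k))).
  assert (HK : 0 <= K).
  { unfold K. pose proof PI_RGT_0. apply Rmult_le_pos. lra. apply Rdiv_le_0_compat. apply sqrt_pos.
    apply sqrt_lt_R0; lra. }
  pose proof (evT a b q Hb Ha Hq Hq3') as Hev. fold s0 k in Hev.
  rewrite HJd in *.
  assert (HTlim : forall M, exists d, 0 < d /\ forall E, E_plus a b q - d < E < E_plus a b q ->
     M <= T a b (q * (q ^ 2 - a) / b) E).
  { intro M. destruct (Hev M 1 ltac:(lra)) as [d [Hd HE]]. exists d. split; auto.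
    intros E HE'. destruct (HE E HE') as (s1 & s2 & s3 & H1 & H2 & H3 & H4 & H5 & HT & HM & HI).
    rewrite HT. auto. }
  split; [|split; [|split; [|split]]].
  - apply lim_pinf. auto.
  - apply lim_pinf. intro M.
    destruct (Hev (4 * (Rabs M + K) / s0) (s0 / 2) ltac:(lra)) as [d [Hd HE]]. exists d. split; auto.
    intros E HE'. destruct (HE E HE') as (s1 & s2 & s3 & H1 & H2 & H3 & H4 & H5 & HT & HM & HI).
    rewrite HM.
    destruct (IM_bounds k s0 s1 s2 s3 Hk H1 H2 H3 ltac:(lra)) as [Hl _]. fold K in Hl.
    set (IG := RInt (gf k s1 s2 s3) 0 (PI / 2) : R) in *.
    assert (HIG : 0 <= IG). { assert (0 <= 4 * (Rabs M + K) / s0). { apply Rdiv_le_0_compat; [|lra].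
      pose proof (Rabs_pos M); lra. } lra. }
    assert (s0 / 2 * IG <= s2 * IG) by (apply Rmult_le_compat_r; lra).
    assert (s0 / 2 * IG >= s0 / 2 * (4 * (Rabs M + K) / s0 / 2)) by (apply Rle_ge, Rmult_le_compat_l; lra).
    replace (s0 / 2 * (4 * (Rabs M + K) / s0 / 2)) with (Rabs M + K) in * by (field; lra).
    pose proof (Rle_abs M). lra.
  - apply lim_fin. intros eps Heps.
    destruct (Hev (2 * K / eps + 1) (eps / 2) ltac:(lra)) as [d [Hd HE]]. exists d. split; auto.
    intros E HE'. destruct (HE E HE') as (s1 & s2 & s3 & H1 & H2 & H3 & H4 & H5 & HT & HM & HI).
    rewrite HM, HT.
    destruct (IM_bounds k s0 s1 s2 s3 Hk H1 H2 H3 ltac:(lra)) as [Hl Hu]. fold K in Hl.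
    set (IG := RInt (gf k s1 s2 s3) 0 (PI / 2) : R) in *.
    set (IM := RInt (fun t => Sf s1 s2 t * gf k s1 s2 s3 t) 0 (PI / 2) : R) in *.
    assert (H2K : 0 <= 2 * K / eps) by (apply Rdiv_le_0_compat; lra).
    assert (HIG : 0 < IG) by lra.
    replace ((q ^ 2 - a) / (2 * b)) with (s0 / 2) by (unfold s0; field; lra).
    assert (HKe : K < eps / 2 * (2 * IG)).
    { assert (2 * K / eps * eps < (2 * IG) * eps) by (apply Rmult_lt_compat_r; lra).
      replace (2 * K / eps * eps) with (2 * K) in H by (field; lra). lra. }
    assert (Hx1 : IM / (2 * IG) <= s2 / 2).
    { apply (Rmult_le_reg_r (2 * IG)). lra. replace (IM / (2 * IG) * (2 * IG)) with IM by (field; lra).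
      lra. }
    assert (Hx2 : s2 / 2 - eps / 2 < IM / (2 * IG)).
    { apply (Rmult_lt_reg_r (2 * IG)). lra. replace (IM / (2 * IG) * (2 * IG)) with IM by (field; lra).
      lra. }
    apply Rabs_lt_between'. lra.
  - apply lim_pinf. intro M.
    set (Jv := q * (q ^ 2 - a) / b) in *.
    destruct (HTlim (2 * Rabs M / Jv + 1)) as [d [Hd HE]]. exists d. split; auto.
    intros E HE'. specialize (HE E HE'). unfold Pt. fold Jv.
    assert (0 <= 2 * Rabs M / Jv) by (apply Rdiv_le_0_compat; [pose proof (Rabs_pos M)|]; lra).
    assert (Jv * (2 * Rabs M / Jv + 1) <= Jv * T a b Jv E) by (apply Rmult_le_compat_l; lra).
    replace (Jv * (2 * Rabs M / Jv + 1)) with (2 * Rabs M + Jv) in H0 by (field; lra).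
    pose proof (Rle_abs M). lra.
  - apply lim_fin. intros eps Heps.
    destruct (HTlim 1) as [d [Hd HE]]. exists d. split; auto.
    intros E HE'. specialize (HE E HE'). unfold Pt.
    replace (1 / 2 * (q * (q ^ 2 - a) / b) * T a b (q * (q ^ 2 - a) / b) E / T a b (q * (q ^ 2 - a) / b) E
      - q * (q ^ 2 - a) / (2 * b)) with 0 by (field; lra).
    rewrite Rabs_R0. auto.
Qed.
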